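(* Let $L$ be an atomic orthomodular lattice and let $V\in\mathcal{B}(L)$ be a $2$-dimensional Boolean subalgebra, with generating family $\mathcal{F}_V=\{P,P^{\perp}\}$. Then: (i) if $V$ is maximal in $\mathcal{B}(L)$, then $P$ and $P^{\perp}$ are (complementary) atoms of $L$; (ii) if $V$ is included in a $3$-dimensional $W\in\mathcal{B}(L)$ that is maximal in $\mathcal{B}(L)$, then one of $P,P^{\perp}$ is an atom of $L$ and the other is the join of two atoms of $L$; moreover, $W$ contains precisely two $2$-dimensional elements of $\mathcal{B}(L)$ other than $V$; (iii) if $V$ is neither maximal in $\mathcal{B}(L)$ nor included in a $3$-dimensional element of $\mathcal{B}(L)$ that is maximal in $\mathcal{B}(L)$, then one of $P,P^{\perp}$ is an atom of $L$ if and only if every $4$-dimensional $W\in\mathcal{B}(L)$ with $V\subseteq W$ contains precisely three $3$-dimensional elements $V_1,V_2,V_3\in\mathcal{B}(L)$ with $V\subset V_i$ for $i=1,2,3$.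
   Context: $L$ is a lattice with least element $0$, greatest element $1$ and an orthocomplementation $P\mapsto P^{\perp}$, which is orthomodular and atomic (every nonzero element lies above an atom, i.e. a minimal nonzero element). Elements $P,Q$ are orthogonal if $P\le Q^{\perp}$. A Boolean subalgebra (BSA) $V$ of $L$ is said to be generated by a family $\mathcal{F}$ of nonzero pairwise orthogonal elements of $L$ with join $1$ if the elements of $\mathcal{F}$ are the atoms of $V$ and every element of $V$ is a join of elements of $\mathcal{F}$; this family is denoted $\mathcal{F}_V$. $\mathcal{B}(L)$ denotes the set of those BSAs of $L$ that are generated by some such family, partially ordered by inclusion (only such BSAs are considered). The dimension of $V\in\mathcal{B}(L)$ is the cardinality of $\mathcal{F}_V$. ''Maximal'' means maximal in the poset $\mathcal{B}(L)$. *)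

(* Defs.v *)
From mathcomp Require Import all_boot all_order.
Set Implicit Arguments. Unset Strict Implicit. Unset Printing Implicit Defensive.
Import Order.TTheory.
Local Open Scope order_scope.

Section OML.
Context {d : Order.disp_t} {L : tbLatticeType d} (perp : L -> L).

Definition orthomodular : Prop :=
  [/\ (forall x y : L, x <= y -> perp y <= perp x),
      (forall x : L, perp (perp x) = x),
      (forall x : L, x `&` perp x = \bot),
      (forall x : L, x `|` perp x = \top)
    & (forall x y : L, x <= y -> y = x `|` (y `&` perp x))].

Definition atom (a : L) : Prop :=
  a != \bot /\ forall b : L, b <= a -> b = \bot \/ b = a.

Definition atomic : Prop :=
  forall x : L, x != \bot -> exists a, atom a /\ a <= x.

Definition orthogonal (x y : L) : Prop := x <= perp y.

Definition pincl (V W : L -> Prop) : Prop := forall x, V x -> W x.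
Definition peq (V W : L -> Prop) : Prop := forall x, V x <-> W x.

Definition is_sup (S : L -> Prop) (x : L) : Prop :=
  (forall s, S s -> s <= x) /\
  (forall y, (forall s, S s -> s <= y) -> x <= y).

Definition BSA (V : L -> Prop) : Prop :=
  [/\ V \bot, V \top,
      (forall x, V x -> V (perp x)),
      (forall x y, V x -> V y -> V (x `&` y) /\ V (x `|` y))
    & (forall x y z, V x -> V y -> V z ->
         x `&` (y `|` z) = (x `&` y) `|` (x `&` z))].

Definition atom_of (V : L -> Prop) (a : L) : Prop :=
  [/\ V a, a != \bot & forall b, V b -> b <= a -> b = \bot \/ b = a].

Definition generated_by (V F : L -> Prop) : Prop :=
  BSA V /\
  [/\ (forall x, F x -> x != \bot),
      (forall x y, F x -> F y -> x <> y -> orthogonal x y),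
      is_sup F \top,
      (forall x, F x <-> atom_of V x)
    & (forall v, V v -> exists G, pincl G F /\ is_sup G v)].

Definition inB (V : L -> Prop) : Prop := exists F, generated_by V F.

Definition has_dim (V : L -> Prop) (n : nat) : Prop :=
  exists F, generated_by V F /\
    exists f : 'I_n -> L, injective f /\ (forall x, F x <-> exists i, f i = x).

Definition maximalB (V : L -> Prop) : Prop :=
  inB V /\ forall W, inB W -> pincl V W -> pincl W V.

End OML.

(* Main.v *)
Require Import Defs.
From mathcomp Require Import all_boot all_order.
From Stdlib Require Import Classical_Prop ClassicalEpsilon.
From mathcomp Require Import zify.
Set Implicit Arguments. Unset Strict Implicit. Unset Printing Implicit Defensive.
Import Order.TTheory.
Local Open Scope order_scope.

Definition pb (P : Prop) : bool := if excluded_middle_informative P then true else false.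
Lemma pbP (P : Prop) : pb P <-> P.
Proof. by rewrite /pb; case: excluded_middle_informative. Qed.

Section OMLfacts.
Context {d : Order.disp_t} {L : tbLatticeType d} (perp : L -> L).
Hypothesis HOML : orthomodular perp.

Let H' := HOML.
Lemma perp_anti x y : x <= y -> perp y <= perp x.
Proof. by move: H' => [h _ _ _ _]; apply: h. Qed.
Lemma perpK x : perp (perp x) = x.
Proof. by move: H' => [_ h _ _ _]; apply: h. Qed.
Lemma meetxperp x : x `&` perp x = \bot.
Proof. by move: H' => [_ _ h _ _]; apply: h. Qed.
Lemma joinxperp x : x `|` perp x = \top.
Proof. by move: H' => [_ _ _ h _]; apply: h. Qed.
Lemma oml x y : x <= y -> y = x `|` (y `&` perp x).
Proof. by move: H' => [_ _ _ _ h]; apply: h. Qed.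

Lemma le_perp x y : (perp x <= perp y) = (y <= x).
Proof.
apply/idP/idP; last exact: perp_anti.
by move/perp_anti; rewrite !perpK.
Qed.
Lemma orth_sym x y : x <= perp y -> y <= perp x.
Proof. by move=> h; rewrite -le_perp perpK. Qed.
Lemma perpU x y : perp (x `|` y) = perp x `&` perp y.
Proof.
apply/le_anti/andP; split.
  by rewrite lexI !perp_anti // ?leUl ?leUr.
apply: orth_sym; rewrite leUx; apply/andP; split; apply: orth_sym.
  exact: leIl. exact: leIr.
Qed.
Lemma perpI x y : perp (x `&` y) = perp x `|` perp y.
Proof. by rewrite -[x in LHS]perpK -[y in LHS]perpK -perpU perpK. Qed.
Lemma perp0 : perp \bot = \top.
Proof. by rewrite -(joinxperp \bot) join0x. Qed.
Lemma perp1 : perp \top = \bot.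
Proof. by rewrite -perp0 perpK. Qed.
Lemma orth_bot x y : x <= y -> x <= perp y -> x = \bot.
Proof. move=> h1 h2; apply/eqP; rewrite -lex0 -(meetxperp y) lexI h1 h2 //. Qed.
Lemma compl_uniq x y : x <= perp y -> x `|` y = \top -> x = perp y.
Proof.
move=> h1 h2; rewrite [RHS](oml h1) -perpU [y `|` x]joinC h2 perp1 joinx0 //.
Qed.
Lemma perp_eq0 x : (perp x == \bot) = (x == \top).
Proof.
apply/eqP/eqP => h; last by rewrite h perp1.
by rewrite -(perpK x) h perp0.
Qed.
Lemma perp_eq1 x : (perp x == \top) = (x == \bot).
Proof. by rewrite -perp_eq0 perpK. Qed.
Lemma perp_inj x y : perp x = perp y -> x = y.
Proof. by move=> h; rewrite -(perpK x) h perpK. Qed.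

Section Fam.
Variable n : nat.
Variable f : 'I_n -> L.
Definition J (S : {set 'I_n}) := \join_(i in S) f i.
Definition good := [/\ (forall i, f i != \bot),
  (forall i j, i != j -> f i <= perp (f j)) & J setT = \top].
Definition Bf (x : L) : Prop := exists S, x = J S.
Definition range (x : L) : Prop := exists i, f i = x.

Implicit Types S T : {set 'I_n}.
Hypothesis Hg : good.
Lemma g_nz i : f i != \bot. Proof. by case: Hg. Qed.
Lemma g_orth i j : i != j -> f i <= perp (f j). Proof. by case: Hg => _ h _ ?; apply: h. Qed.
Lemma g_top : J setT = \top. Proof. by case: Hg. Qed.

Lemma J0 : J set0 = \bot. Proof. by rewrite /J big_set0. Qed.
Lemma J1 i : J [set i] = f i. Proof. by rewrite /J big_set1. Qed.
Lemma JU S T : J (S :|: T) = J S `|` J T. Proof. exact: joins_setU. Qed.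
Lemma Jle S T : S \subset T -> J S <= J T. Proof. exact: le_joins. Qed.
Lemma fJ i S : i \in S -> f i <= J S. Proof. move=> h; exact: joins_sup. Qed.
Lemma Jorth1 S i : i \notin S -> J S <= perp (f i).
Proof.
move=> h; apply/joinsP => j jS; apply: g_orth.
by apply: contraNneq h => <-.
Qed.
Lemma Jorth S T : [disjoint S & T] -> J S <= perp (J T).
Proof.
move=> h; apply/joinsP => i iS; apply: orth_sym; apply: Jorth1.
by move: h; rewrite disjoint_sym => /disjointFl ->.
Qed.
Lemma JC S : perp (J S) = J (~: S).
Proof.
apply/esym/compl_uniq.
  by apply: Jorth; rewrite disjoint_sym disjoints_subset setCK.
by rewrite -JU setUC setUCr g_top.
Qed.
Lemma JI S T : J S `&` J T = J (S :&: T).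
Proof.
by rewrite -[LHS]perpK perpI !JC -JU JC setCU !setCK.
Qed.
Lemma Jsub S T : J S <= J T -> S \subset T.
Proof.
move=> h; apply/subsetP => i iS; apply/negPn/negP => iT.
have := g_nz i; rewrite (orth_bot (le_trans (fJ iS) h) (orth_sym (Jorth1 iT))) eqxx //.
Qed.
Lemma Jinj S T : J S = J T -> S = T.
Proof. by move=> h; apply/eqP; rewrite eqEsubset !Jsub // h. Qed.
Lemma J_nz S : J S != \bot -> S != set0.
Proof. by apply: contraNneq => ->; rewrite J0. Qed.
Lemma Jdisj S T : J S <= perp (J T) -> S :&: T = set0.
Proof.
move=> h; apply: Jinj; rewrite J0 -JI; apply: orth_bot (leIr _ _) (le_trans (leIl _ _) h).
Qed.


Lemma good_inj : injective f.
Proof.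
move=> i j h; apply/eqP; apply/negPn/negP => nij.
have := g_nz i; rewrite (orth_bot (le_refl (f i))) ?eqxx //.
by rewrite [X in perp X]h; apply: g_orth.
Qed.

Lemma Bf_J S : Bf (J S). Proof. by exists S. Qed.
Lemma Bf_f i : Bf (f i). Proof. by exists [set i]; rewrite J1. Qed.

Lemma Bf_BSA : BSA perp Bf.
Proof.
split.
- by exists set0; rewrite J0.
- by exists setT; rewrite g_top.
- by move=> x [S ->]; exists (~: S); rewrite JC.
- by move=> x y [S ->] [T ->]; split; [exists (S :&: T); rewrite JI | exists (S :|: T); rewrite JU].
- by move=> x y z [S ->] [T ->] [U ->]; rewrite -JU !JI -JU setIUr.
Qed.

Lemma atom_of_Bf x : range x <-> atom_of Bf x.
Proof.
split.
  move=> [i <-]; split; [exact: Bf_f | exact: g_nz |].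
  move=> b [S ->]; rewrite -J1 => /Jsub; rewrite subset1 => /orP[] /eqP ->.
    by right. by left; rewrite J0.
move=> [[S ->] nz h]; have /set0Pn [i iS] := J_nz nz.
case: (h (f i) (Bf_f i) (fJ iS)) => [e|e]; last by exists i.
by have := g_nz i; rewrite e eqxx.
Qed.

Lemma Bf_gen : generated_by perp Bf range.
Proof.
split; first exact: Bf_BSA.
split.
- by move=> x [i <-]; exact: g_nz.
- move=> x y [i <-] [j <-] ne; apply: g_orth; by apply/eqP => e; apply: ne; rewrite e.
- split; first by move=> s _; exact: lex1.
  move=> y h; rewrite -g_top; apply/joinsP => i _; apply: h; by exists i.
- exact: atom_of_Bf.
- move=> v [S ->]; exists (fun y => exists i, i \in S /\ f i = y); split.
    by move=> y [i [_ <-]]; exists i.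
  split; first by move=> s [i [iS <-]]; exact: fJ.
  by move=> y h; apply/joinsP => i iS; apply: h; exists i.
Qed.

End Fam.

Lemma J_closed n (f : 'I_n -> L) (W : L -> Prop) :
  BSA perp W -> (forall i, W (f i)) -> forall S, W (J f S).
Proof.
move=> [W0 _ _ Wj _] Wf S; rewrite /J.
apply: big_ind => //; first by move=> x y wx wy; case: (Wj x y wx wy).
Qed.

Lemma sup_unique (G : L -> Prop) x y : is_sup G x -> is_sup G y -> x = y.
Proof. by move=> [u1 l1] [u2 l2]; apply/le_anti; rewrite l1 // l2. Qed.

Lemma J_sup n (f : 'I_n -> L) (G : L -> Prop) :
  pincl G (range f) -> is_sup G (J f [set i | pb (G (f i))]).
Proof.
move=> hG; split.
  move=> s Gs; have [i e] := hG s Gs; rewrite -e; apply: fJ.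
  by rewrite inE; apply/pbP; rewrite e.
by move=> y h; apply/joinsP => i; rewrite inE => /pbP; apply: h.
Qed.

Lemma gen_good n (W F : L -> Prop) (f : 'I_n -> L) :
  generated_by perp W F -> injective f -> (forall x, F x <-> range f x) ->
  good f /\ peq W (Bf f).
Proof.
move=> [BW [Fnz Forth [_ Fl] Fat Fsup]] finj hF.
have Ff i : F (f i) by apply/hF; exists i.
have gf : good f.
  split.
  - by move=> i; apply: Fnz.
  - move=> i j ne; apply: Forth => //; by move/finj => e; move: ne; rewrite e eqxx.
  - apply/le_anti; rewrite lex1 /=; apply: Fl => s /hF [i <-]; apply: fJ.
    by rewrite inE.
split => // x; split.
  move=> /Fsup [G [GF sG]]; exists [set i | pb (G (f i))].
  apply: sup_unique sG _; by apply: J_sup => y /GF /hF.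
move=> [S ->]; apply: J_closed => // i; by have [] := (Fat (f i)).1 (Ff i).
Qed.

Lemma peq_range1 n m (f : 'I_n -> L) (g : 'I_m -> L) :
  good g -> (forall x, range f x -> range g x) -> pincl (Bf f) (Bf g).
Proof.
move=> gg h x [S ->].
pose G := fun y => exists i, i \in S /\ f i = y.
have hG : pincl G (range g) by move=> y [i [_ <-]]; apply: h; exists i.
exists [set i | pb (G (g i))]; apply: sup_unique (J_sup hG).
split; first by move=> s [i [iS <-]]; exact: fJ.
by move=> y hy; apply/joinsP => i iS; apply: hy; exists i.
Qed.

Lemma peq_range n m (f : 'I_n -> L) (g : 'I_m -> L) :
  good f -> good g -> (forall x, range f x <-> range g x) -> peq (Bf f) (Bf g).
Proof.
move=> gf gg h x; split; apply: peq_range1 => // y; by move/h.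
Qed.

Lemma atom_of_peq (V W : L -> Prop) x : peq V W -> atom_of V x -> atom_of W x.
Proof.
move=> e [vx nz h]; split => //; first by apply/e.
by move=> b /e; apply: h.
Qed.

Lemma range_peq n m (f : 'I_n -> L) (g : 'I_m -> L) :
  good f -> good g -> peq (Bf f) (Bf g) -> forall x, range f x <-> range g x.
Proof.
move=> gf gg e x; rewrite (atom_of_Bf gf) (atom_of_Bf gg); split; apply: atom_of_peq => //.
by move=> y; split => /e.
Qed.


Definition f2 a b : 'I_2 -> L := fun i => nth \bot [:: a; b] i.
Definition f3 a b c : 'I_3 -> L := fun i => nth \bot [:: a; b; c] i.
Definition f4 a b c e : 'I_4 -> L := fun i => nth \bot [:: a; b; c; e] i.

Lemma range_f2 a b x : range (f2 a b) x <-> x = a \/ x = b.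
Proof.
split; first by move=> [[[|[|?]] ?] <-] //=; [left|right].
by case=> ->; [exists ord0 | exists (@Ordinal 2 1 isT)].
Qed.
Lemma range_f3 a b c x : range (f3 a b c) x <-> [\/ x = a, x = b | x = c].
Proof.
split; first by move=> [[[|[|[|?]]] ?] <-] //=; [apply: Or31|apply: Or32|apply: Or33].
by case=> ->; [exists ord0 | exists (@Ordinal 3 1 isT) | exists (@Ordinal 3 2 isT)].
Qed.

Lemma JT n (f : 'I_n -> L) : J f setT = \join_i f i.
Proof. by rewrite /J; apply: eq_bigl => i; rewrite in_setT. Qed.

Lemma good2 a b : a != \bot -> b != \bot -> a <= perp b -> a `|` b = \top ->
  good (f2 a b).
Proof.
move=> na nb ab t; split.
- by move=> [[|[|?]] ?].
- by move=> [[|[|?]] ?] [[|[|?]] ?] //= _; apply: orth_sym.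
- by rewrite JT !big_ord_recl big_ord0 /= joinx0.
Qed.

Lemma good3 a b c : a != \bot -> b != \bot -> c != \bot ->
  a <= perp b -> a <= perp c -> b <= perp c -> a `|` b `|` c = \top ->
  good (f3 a b c).
Proof.
move=> na nb nc ab ac bc t; split.
- by move=> [[|[|[|?]]] ?].
- by move=> [[|[|[|?]]] ?] [[|[|[|?]]] ?] //= _; apply: orth_sym.
- by rewrite JT !big_ord_recl big_ord0 /= joinx0 joinA.
Qed.

Lemma good4 a b c e : a != \bot -> b != \bot -> c != \bot -> e != \bot ->
  a <= perp b -> a <= perp c -> a <= perp e -> b <= perp c -> b <= perp e ->
  c <= perp e -> a `|` b `|` c `|` e = \top ->
  good (f4 a b c e).
Proof.
move=> na nb nc ne ab ac ae bc be ce t; split.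
- by move=> [[|[|[|[|?]]]] ?].
- by move=> [[|[|[|[|?]]]] ?] [[|[|[|[|?]]]] ?] //= _; apply: orth_sym.
- by rewrite JT !big_ord_recl big_ord0 /= joinx0 !joinA.
Qed.

Lemma split2 q : q != \bot -> q != \top -> good (f2 q (perp q)).
Proof.
move=> h1 h2; apply: good2 => //; first by rewrite perp_eq0.
  by rewrite perpK.
exact: joinxperp.
Qed.

Lemma split3 x y : x != \bot -> y != \bot -> x <= perp y -> x `|` y != \top ->
  good (f3 x y (perp (x `|` y))).
Proof.
move=> nx ny xy t; apply: good3 => //; first by rewrite perp_eq0.
- by rewrite perpK leUl.
- by rewrite perpK leUr.
- exact: joinxperp.
Qed.

Lemma split4 x y z : x != \bot -> y != \bot -> z != \bot ->
  x <= perp y -> x <= perp z -> y <= perp z -> x `|` y `|` z != \top ->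
  good (f4 x y z (perp (x `|` y `|` z))).
Proof.
move=> nx ny nz xy xz yz t; apply: good4 => //; first by rewrite perp_eq0.
- by rewrite perpK -joinA leUl.
- by rewrite perpK (le_trans _ (leUl _ _)) // leUr.
- by rewrite perpK leUr.
- exact: joinxperp.
Qed.

Definition V2 q x := [\/ x = \bot, x = q, x = perp q | x = \top].

Lemma V2_char V F q : generated_by perp V F -> (forall x, F x <-> x = q \/ x = perp q) ->
  peq V (V2 q).
Proof.
move=> [[V0 V1 Vp _ _] [_ _ _ Fat Fsup]] hF x.
have Vq : V q by have [] := (Fat q).1 (proj2 (hF q) (or_introl erefl)).
split; last by case=> ->; auto.
move=> /Fsup [G [GF sG]].
have GE s : G s -> s = q \/ s = perp q by move/GF/hF.
case: (classic (G q)) => Gq; case: (classic (G (perp q))) => Gp.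
- apply: Or44; apply: sup_unique sG _; split; first by move=> *; exact: lex1.
  by move=> y h; rewrite -(joinxperp q) leUx !h.
- apply: Or42; apply: sup_unique sG _; split; last by move=> y h; apply: h.
  by move=> s Gs; case: (GE s Gs) => e; [rewrite e | by move: Gs; rewrite e].
- apply: Or43; apply: sup_unique sG _; split; last by move=> y h; apply: h.
  by move=> s Gs; case: (GE s Gs) => e; [by move: Gs; rewrite e | rewrite e].
- apply: Or41; apply: sup_unique sG _; split; last by move=> y h; exact: le0x.
  by move=> s Gs; case: (GE s Gs) => e; move: Gs; rewrite e.
Qed.

Lemma V2_perp q : peq (V2 (perp q)) (V2 q).
Proof. move=> x; rewrite /V2 perpK; split; case=> ->; first [apply: Or41; done|apply: Or42; done|apply: Or43; done|apply: Or44; done]. Qed.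

Lemma V2_sub W q : BSA perp W -> W q -> pincl (V2 q) W.
Proof. by move=> [W0 W1 Wp _ _] Wq x; case=> ->; auto. Qed.

Lemma Bf2_V2 q : q != \bot -> q != \top -> peq (Bf (f2 q (perp q))) (V2 q).
Proof.
move=> h1 h2; apply: V2_char; first exact: Bf_gen (split2 h1 h2).
exact: range_f2.
Qed.

Lemma dim_good (W : L -> Prop) n : has_dim perp W n ->
  exists f : 'I_n -> L, good f /\ peq W (Bf f).
Proof.
move=> [F [gen [f [finj hF]]]]; exists f; apply: gen_good gen finj _.
by move=> x; rewrite hF.
Qed.

Lemma good_dim n (f : 'I_n -> L) : good f -> has_dim perp (Bf f) n.
Proof.
move=> gf; exists (range f); split; first exact: Bf_gen.
by exists f; split => //; exact: good_inj.
Qed.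

Lemma dim2 U : has_dim perp U 2 -> exists q, [/\ q != \bot, q != \top & peq U (V2 q)].
Proof.
move=> [F [gen [h [hinj hF]]]].
have [gh _] := gen_good gen hinj (fun x => hF x).
set h0 := h ord0; set h1 := h (lift ord0 ord0).
have E0 p : h (@Ordinal 2 0 p) = h0 by congr h; exact: val_inj.
have E1 p : h (@Ordinal 2 1 p) = h1 by congr h; exact: val_inj.
have e : h1 = perp h0.
  apply: compl_uniq; first by apply: (g_orth gh).
  by rewrite joinC; move: (g_top gh); rewrite JT !big_ord_recl big_ord0 joinx0.
exists h0; split.
- exact: (g_nz gh).
- apply/eqP => e0; have := g_nz gh (lift ord0 ord0); rewrite -/h1 e e0 perp1 eqxx //.
- apply: V2_char gen _ => x; rewrite hF -e; split.
    by move=> [[[|[|?]] p] <-] //; [left; rewrite E0 | right; rewrite E1].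
  by case=> ->; [exists ord0 | exists (lift ord0 ord0)].
Qed.

Lemma I3_cover (k k1 k2 j : 'I_3) : k != k1 -> k != k2 -> k1 != k2 ->
  [|| j == k, j == k1 | j == k2].
Proof.
by move: k k1 k2 j => [[|[|[|?]]] ?] [[|[|[|?]]] ?] [[|[|[|?]]] ?] [[|[|[|?]]] ?].
Qed.

Lemma I3_others (k : 'I_3) : exists k1 k2 : 'I_3, [/\ k != k1, k != k2 & k1 != k2].
Proof.
move: k => [[|[|[|?]]] ?] //.
- by exists (@Ordinal 3 1 isT), (@Ordinal 3 2 isT).
- by exists (@Ordinal 3 0 isT), (@Ordinal 3 2 isT).
- by exists (@Ordinal 3 0 isT), (@Ordinal 3 1 isT).
Qed.

Lemma perp3 (g : 'I_3 -> L) k k1 k2 : good g -> k != k1 -> k != k2 -> k1 != k2 ->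
  perp (g k) = g k1 `|` g k2.
Proof.
move=> gg a b c; rewrite -(J1 g k) (JC gg) -(J1 g k1) -(J1 g k2) -(JU g).
congr J; apply/setP => j; rewrite !inE.
have := I3_cover j a b c; case/or3P => /eqP ->; rewrite ?eqxx /=.
- by rewrite (negbTE a) (negbTE b).
- by rewrite eq_sym a.
- by rewrite eq_sym b orbT.
Qed.

Lemma dim3_elem (g : 'I_3 -> L) x : good g -> Bf g x -> x != \bot -> x != \top ->
  exists k, x = g k \/ perp x = g k.
Proof.
move=> gg [S ->] n0 n1.
have c0 : #|S| != 0 by rewrite cards_eq0; apply: J_nz n0.
have c3 : #|S| != 3.
  apply: contra n1 => /eqP c; suff -> : S = setT by rewrite (g_top gg).
  by apply/eqP; rewrite eqEcard subsetT cardsT card_ord c.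
have cle : #|S| <= 3 by have := max_card (mem S); rewrite card_ord.
have cc : #|S| + #|~: S| = 3 by rewrite cardsC card_ord.
have : (#|S| == 1) || (#|~: S| == 1).
  move: c0 c3 cle cc; move: #|S| #|~: S| => a b; lia.
case/orP => /cards1P [k e]; exists k.
  by left; rewrite e (J1 g).
by right; rewrite (JC gg) e (J1 g).
Qed.


Lemma BSA_join W x y : BSA perp W -> W x -> W y -> W (x `|` y).
Proof. by move=> [_ _ _ h _] wx wy; case: (h x y wx wy). Qed.
Lemma BSA_perp W x : BSA perp W -> W x -> W (perp x).
Proof. by move=> [_ _ h _ _]; apply: h. Qed.

Lemma not_atom (x : L) : x != \bot -> ~ atom x -> exists b, [/\ b <= x, b != \bot & b != x].
Proof.
move=> nx na; apply: NNPP => hn; apply: na; split => // b bx.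
apply: NNPP => /not_or_and [h1 h2]; apply: hn; exists b; split => //; exact/eqP.
Qed.

Lemma top_ne (n : nat) (g : 'I_n -> L) i j : good g -> i != j -> g i != \top.
Proof.
move=> gg ij; apply/eqP => e; have := g_orth gg ij; rewrite e.
move=> h; have := g_nz gg j; rewrite -(perpK (g j)); rewrite perp_eq0.
by move: h; rewrite -[\top]perpK le_perp perpK perp1 lex0 => /eqP ->; rewrite perp0 eqxx.
Qed.

Lemma part_i V P : peq V (V2 P) -> P != \bot -> P != \top -> maximalB perp V -> atom P.
Proof.
move=> hV n0 n1 [_ maxV]; apply: NNPP => na.
have [b [bP nb nbP]] := not_atom n0 na.
set y := P `&` perp b.
have eP : b `|` y = P by rewrite /y -oml.
have ny : y != \bot by apply: contra nbP => /eqP y0; rewrite -eP y0 joinx0.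
have by_ : b <= perp y by apply: orth_sym; exact: leIr.
have gw : good (f3 b y (perp (b `|` y))) by apply: split3 => //; rewrite eP.
have sub : pincl V (Bf (f3 b y (perp (b `|` y)))).
  move=> x /hV; apply: V2_sub; first exact: Bf_BSA.
  by rewrite -eP; apply: BSA_join; [exact: Bf_BSA | exact: (Bf_f _ ord0) | exact: (Bf_f _ (lift ord0 ord0))].
have := maxV _ (ex_intro _ _ (Bf_gen gw)) sub b (Bf_f _ ord0).
move/hV; case=> e.
- by move: nb; rewrite e eqxx.
- by move: nbP; rewrite e eqxx.
- by move: nb; rewrite (orth_bot bP) ?eqxx // e.
- by move: n1; rewrite eq_le lex1 /= -e bP.
Qed.

Lemma max_atoms W (g : 'I_3 -> L) : good g -> peq W (Bf g) -> maximalB perp W ->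
  forall k, atom (g k).
Proof.
move=> gg hW [_ maxW] k; apply: NNPP => na.
have [b [bP nb nbP]] := not_atom (g_nz gg k) na.
have [k1 [k2 [a1 a2 a3]]] := I3_others k.
set y := g k `&` perp b.
have eP : b `|` y = g k by rewrite /y -oml.
have ny : y != \bot by apply: contra nbP => /eqP y0; rewrite -eP y0 joinx0.
have by_ : b <= perp y by apply: orth_sym; exact: leIr.
have e2 : perp (g k2) = g k `|` g k1.
  by apply: perp3; rewrite // eq_sym.
have gh : good (f4 b y (g k1) (perp (b `|` y `|` g k1))).
  apply: split4 (g_nz gg k1) by_ (le_trans bP (g_orth gg a1))
    (le_trans (leIl _ _) (g_orth gg a1)) _ => //.
  by rewrite eP -e2 perp_eq1 (g_nz gg).
have sub : pincl W (Bf (f4 b y (g k1) (perp (b `|` y `|` g k1)))).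
  move=> x /hW [S ->]; apply: J_closed; first exact: Bf_BSA.
  move=> j; have := I3_cover j a1 a2 a3; case/or3P => /eqP ->.
  - rewrite -eP; apply: BSA_join; [exact: Bf_BSA | exact: (Bf_f _ ord0) | exact: (Bf_f _ (@Ordinal 4 1 isT))].
  - exact: (Bf_f _ (@Ordinal 4 2 isT)).
  - by rewrite eP -e2 perpK; exact: (Bf_f _ (@Ordinal 4 3 isT)).
have := maxW _ (ex_intro _ _ (Bf_gen gh)) sub b (Bf_f _ ord0).
move/hW => [S eS].
have : S \subset [set k] by apply: (Jsub gg); rewrite -eS (J1 g).
rewrite subset1 => /orP[] /eqP eS'; move: eS; rewrite eS' ?(J1 g) ?J0 => e.
- by move: nbP; rewrite e eqxx.
- by move: nb; rewrite e eqxx.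
Qed.

Lemma notV2 (g : 'I_3 -> L) i j m : good g -> i != j -> i != m -> j != m ->
  ~ V2 (g j) (g i).
Proof.
move=> gg ij im jm; have e : perp (g j) = g i `|` g m by apply: perp3; rewrite // eq_sym.
case=> h.
- by move: (g_nz gg i); rewrite h eqxx.
- by move: ij; rewrite (good_inj gg h) eqxx.
- have : g m <= g i by rewrite h e leUr.
  move=> hm; have := g_nz gg m; rewrite (orth_bot hm) ?eqxx //.
  by apply: (g_orth gg); rewrite eq_sym.
- by move: (top_ne gg ij); rewrite h eqxx.
Qed.

Lemma range3 (g : 'I_3 -> L) k k1 k2 x : k != k1 -> k != k2 -> k1 != k2 ->
  range g x <-> [\/ x = g k, x = g k1 | x = g k2].
Proof.
move=> a b c; split.
  move=> [j <-]; have := I3_cover j a b c; case/or3P => /eqP ->; [exact: Or31|exact: Or32|exact: Or33].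
by case=> ->; eexists.
Qed.

Lemma part_ii_core V W (g : 'I_3 -> L) k : good g -> peq W (Bf g) ->
  (forall j, atom (g j)) -> peq V (V2 (g k)) ->
  (exists a b, [/\ atom a, atom b, a <> b & perp (g k) = a `|` b]) /\
  (exists U1 U2 : L -> Prop,
        [/\ ~ peq U1 U2,
            (has_dim perp U1 2 /\ pincl U1 W /\ ~ peq U1 V),
            (has_dim perp U2 2 /\ pincl U2 W /\ ~ peq U2 V)
          & forall U, has_dim perp U 2 -> pincl U W -> ~ peq U V ->
              peq U U1 \/ peq U U2]).
Proof.
move=> gg hW ha hV.
have [k1 [k2 [a1 a2 a3]]] := I3_others k.
split.
  exists (g k1), (g k2); split => //; last exact: perp3.
  by move/(good_inj gg) => e; move: a3; rewrite e eqxx.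
have nz1 := g_nz gg k1; have nz2 := g_nz gg k2.
have nt1 : g k1 != \top by apply: (@top_ne _ g k1 k gg); rewrite eq_sym.
have nt2 : g k2 != \top by apply: (@top_ne _ g k2 k gg); rewrite eq_sym.
have E1 := Bf2_V2 nz1 nt1; have E2 := Bf2_V2 nz2 nt2.
have subW q : Bf g q -> pincl (V2 q) W.
  by move=> bq x hx; apply/hW; apply: V2_sub hx => //; exact: Bf_BSA.
have dimU q (n1 : q != \bot) (n2 : q != \top) : has_dim perp (Bf (f2 q (perp q))) 2.
  exact: good_dim (split2 n1 n2).
have V2q q : V2 q q by apply: Or42.
exists (Bf (f2 (g k1) (perp (g k1)))), (Bf (f2 (g k2) (perp (g k2)))); split.
- move=> e; apply: (@notV2 g k1 k2 k gg) => //; try by rewrite eq_sym.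
  by apply/(E2 _)/(e _)/(E1 _); exact: V2q.
- split; first exact: dimU.
  split; first by move=> x /(E1 _); apply: subW; exact: Bf_f.
  move=> e; apply: (@notV2 g k1 k k2 gg) => //; try by rewrite eq_sym.
  by apply/(hV _)/(e _)/(E1 _); exact: V2q.
- split; first exact: dimU.
  split; first by move=> x /(E2 _); apply: subW; exact: Bf_f.
  move=> e; apply: (@notV2 g k2 k k1 gg) => //; try by rewrite eq_sym.
  by apply/(hV _)/(e _)/(E2 _); exact: V2q.
- move=> U /dim2 [q [q0 q1 hU]] UW nUV.
  have Wq : Bf g q by apply/(hW _)/UW/(hU _); exact: V2q.
  have [j ej] := dim3_elem gg Wq q0 q1.
  have hU' : peq U (V2 (g j)).
    case: ej => <- x; rewrite hU //; symmetry; exact: V2_perp.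
  have := I3_cover j a1 a2 a3; case/or3P => /eqP ej'; rewrite ej' in hU'.
  + by case: nUV => x; rewrite hU' hV.
  + by left => x; rewrite hU' E1.
  + by right => x; rewrite hU' E2.
Qed.


Lemma I4_cover (i0 j1 j2 j3 j : 'I_4) : i0 != j1 -> i0 != j2 -> i0 != j3 ->
  j1 != j2 -> j1 != j3 -> j2 != j3 -> [|| j == i0, j == j1, j == j2 | j == j3].
Proof.
by move: i0 j1 j2 j3 j => [[|[|[|[|?]]]] ?] [[|[|[|[|?]]]] ?] [[|[|[|[|?]]]] ?] [[|[|[|[|?]]]] ?] [[|[|[|[|?]]]] ?].
Qed.

Lemma I4_others (i0 : 'I_4) : exists j1 j2 j3 : 'I_4,
  [/\ i0 != j1, i0 != j2, i0 != j3 & [/\ j1 != j2, j1 != j3 & j2 != j3]].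
Proof.
move: i0 => [[|[|[|[|?]]]] ?] //.
- by exists (@Ordinal 4 1 isT), (@Ordinal 4 2 isT), (@Ordinal 4 3 isT).
- by exists (@Ordinal 4 0 isT), (@Ordinal 4 2 isT), (@Ordinal 4 3 isT).
- by exists (@Ordinal 4 0 isT), (@Ordinal 4 1 isT), (@Ordinal 4 3 isT).
- by exists (@Ordinal 4 0 isT), (@Ordinal 4 1 isT), (@Ordinal 4 2 isT).
Qed.

Lemma atom_J n (f : 'I_n -> L) S : good f -> atom (J f S) -> exists i, S = [set i].
Proof.
move=> gf [nz h]; have /set0Pn [i iS] := J_nz nz.
exists i; apply: (Jinj gf); rewrite (J1 f).
case: (h (f i) (fJ f iS)) => // e; by move: (g_nz gf i); rewrite e eqxx.
Qed.

Lemma Jcard n (f : 'I_n -> L) S T : good f -> J f S = J f T -> #|S| = #|T|.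
Proof. by move=> gf /(Jinj gf) ->. Qed.

Lemma two_single n (T1 T2 C : {set 'I_n}) : T1 :|: T2 = C -> #|C| = 2 ->
  T1 :&: T2 = set0 -> T1 != set0 -> T2 != set0 ->
  exists m1 m2, [/\ T1 = [set m1], T2 = [set m2] & m1 != m2].
Proof.
move=> eU c2 eI n1 n2.
have := cardsUI T1 T2; rewrite eU eI cards0 c2 addn0.
rewrite -!card_gt0 in n1 n2.
move=> e; have [c1 c2'] : #|T1| == 1 /\ #|T2| == 1 by move: e n1 n2; move: #|T1| #|T2| => x y; lia.
move/cards1P: c1 => [m1 e1]; move/cards1P: c2' => [m2 e2].
exists m1, m2; split => //; apply/eqP => e12.
by move: eI; rewrite e1 e2 e12 setIid => /eqP; rewrite -cards_eq0 cards1.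
Qed.

Lemma iii_fwd V P W : peq V (V2 P) -> atom P -> has_dim perp W 4 -> pincl V W ->
  exists U1 U2 U3 : L -> Prop,
         [/\ ~ peq U1 U2 /\ ~ peq U1 U3 /\ ~ peq U2 U3,
             (forall U, U = U1 \/ U = U2 \/ U = U3 ->
                has_dim perp U 3 /\ pincl V U /\ ~ peq V U /\ pincl U W)
           & forall U, has_dim perp U 3 -> pincl V U -> ~ peq V U ->
               pincl U W ->
               peq U U1 \/ peq U U2 \/ peq U U3].
Proof.
move=> hV aP /dim_good [f [gf hW]] VW.
have V2q q : V2 q q by apply: Or42.
have WP : Bf f P by apply/(hW _)/VW/(hV _).
case: WP => S eS; have [i0 ei] := atom_J gf (eq_ind _ atom aP _ eS).
have ePf : P = f i0 by rewrite eS ei (J1 f).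
have [j1 [j2 [j3 [d1 d2 d3 [d12 d13 d23]]]]] := I4_others i0.
have card4 (A : {set 'I_4}) : #|A| + #|~: A| = 4 by rewrite cardsC card_ord.
have JT4 : J f setT = \top := g_top gf.
have J2 j : J f [set i0; j] = P `|` f j by rewrite (JU f) !(J1 f) ePf.
pose fam j := f3 P (f j) (perp (P `|` f j)).
have gU j : i0 != j -> good (fam j).
  move=> ij; apply: split3.
  - by rewrite ePf (g_nz gf).
  - exact: (g_nz gf).
  - by rewrite ePf; apply: (g_orth gf).
  - apply/eqP => e; have := Jcard gf (etrans (J2 j) (etrans e (esym JT4))).
    by rewrite cards2 ij cardsT card_ord.
pose Uj j := Bf (fam j).
have BSAf := Bf_BSA gf.
have props j : i0 != j -> has_dim perp (Uj j) 3 /\ pincl V (Uj j) /\ ~ peq V (Uj j) /\ pincl (Uj j) W.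
  move=> ij; split; first exact: good_dim (gU j ij).
  split; first by move=> x /(hV _); apply: V2_sub; [exact: Bf_BSA (gU j ij) | exact: (Bf_f _ ord0)].
  split.
    move=> e; have := (e (f j)).2 (Bf_f (fam j) (@Ordinal 3 1 isT)).
    move/(hV _); case=> h.
    - by move: (g_nz gf j); rewrite h eqxx.
    - by move: ij; rewrite ePf in h; rewrite (good_inj gf h) eqxx.
    - have := Jcard gf (etrans (J1 f j) (etrans h (etrans (f_equal perp ePf) (etrans (f_equal perp (esym (J1 f i0))) (JC gf _))))).
      by move=> ec; have := card4 [set i0]; rewrite -ec !cards1.
    - have := Jcard gf (etrans (J1 f j) (etrans h (esym JT4))).
      by rewrite cards1 cardsT card_ord.
  move=> x [T ->]; apply/(hW _); apply: J_closed => // -[[|[|[|?]]] ?]; rewrite /fam /f3 //=.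
  - by rewrite ePf; exact: Bf_f.
  - exact: Bf_f.
  - apply: BSA_perp => //; apply: BSA_join => //; rewrite ?ePf; exact: Bf_f.
have dist j j' : i0 != j -> i0 != j' -> j != j' -> ~ peq (Uj j) (Uj j').
  move=> ij ij' jj' e.
  have := (range_peq (gU j ij) (gU j' ij') e (f j)).1 (ex_intro _ (@Ordinal 3 1 isT) erefl).
  move/range_f3; case=> h.
  - by move: ij; rewrite ePf in h; rewrite (good_inj gf h) eqxx.
  - by move: jj'; rewrite (good_inj gf h) eqxx.
  - have := Jcard gf (etrans (J1 f j) (etrans h (etrans (f_equal perp (esym (J2 j'))) (JC gf _)))).
    have := card4 [set i0; j']; rewrite cards2 ij' cards1; move: #|~: [set i0; j']| => z; lia.
exists (Uj j1), (Uj j2), (Uj j3); split.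
- split; first exact: dist.
  by split; apply: dist.
- by move=> U [->|[->|->]]; apply: props.
move=> U /dim_good [g [gg hU]] VU nVU UW.
have : Bf g P by apply/(hU _)/VU/(hV _).
case=> S' eS'; have [k ek] := atom_J gg (eq_ind _ atom aP _ eS').
have ePg : P = g k by rewrite eS' ek (J1 g).
have [k1 [k2 [a1 a2 a3]]] := I3_others k.
have Wg m : Bf f (g m) by apply/(hW _)/UW/(hU _); exact: Bf_f.
have [T1 e1] := Wg k1; have [T2 e2] := Wg k2.
have eU : T1 :|: T2 = ~: [set i0].
  apply: (Jinj gf); rewrite (JU f) -e1 -e2 -(perp3 gg a1 a2 a3) -ePg ePf -(J1 f i0).
  exact: JC.
have eI : T1 :&: T2 = set0 by apply: (Jdisj gf); rewrite -e1 -e2; exact: (g_orth gg).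
have n1 : T1 != set0 by apply: (J_nz (f:=f)); rewrite -e1 (g_nz gg).
have n2 : T2 != set0 by apply: (J_nz (f:=f)); rewrite -e2 (g_nz gg).
have key m1 m2 T : k != m1 -> k != m2 -> m1 != m2 -> g m1 = J f T -> #|T| = 1 ->
    T \subset ~: [set i0] -> peq U (Uj j1) \/ peq U (Uj j2) \/ peq U (Uj j3).
  move=> b1 b2 b3 eT /eqP /cards1P [j Tj] sT.
  have ej : g m1 = f j by rewrite eT Tj (J1 f).
  have ij : i0 != j.
    by move/subsetP: sT => /(_ j); rewrite Tj !inE eqxx eq_sym => /(_ isT).
  have em2 : g m2 = perp (P `|` f j).
    have e' : perp (g m2) = g k `|` g m1 by apply: perp3 => //; rewrite eq_sym.
    by rewrite ePg -ej -e' perpK.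
  have hj : peq U (Uj j).
    move=> x; rewrite (hU x); apply: (peq_range gg (gU j ij)) => y.
    rewrite (range3 _ _ b1 b2 b3) range_f3 -ePg ej em2 //.
  have := I4_cover j d1 d2 d3 d12 d13 d23; case/or4P => /eqP ej'.
  - by move: ij; rewrite ej' eqxx.
  - by left; rewrite -ej'.
  - by right; left; rewrite -ej'.
  - by right; right; rewrite -ej'.
have cU : #|T1 :|: T2| = 3.
  by rewrite eU; have := card4 [set i0]; rewrite cards1; move: #|~: [set i0]| => z; lia.
have := cardsUI T1 T2; rewrite eI cards0 addn0 cU.
rewrite -!card_gt0 in n1 n2 => e.
have [c1|c2] : #|T1| = 1 \/ #|T2| = 1 by move: e n1 n2; move: #|T1| #|T2| => x y; lia.
- apply: (key k1 k2 T1) => //; by rewrite -eU subsetUl.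
- apply: (key k2 k1 T2) => //; first by rewrite eq_sym.
  by rewrite -eU subsetUr.
Qed.


Lemma I4_23 (m1 m2 : 'I_4) : m1 \in ~: [set ord0; @Ordinal 4 1 isT] ->
  m2 \in ~: [set ord0; @Ordinal 4 1 isT] -> m1 != m2 ->
  (nat_of_ord m1 = 2 /\ nat_of_ord m2 = 3) \/ (nat_of_ord m1 = 3 /\ nat_of_ord m2 = 2).
Proof.
by move: m1 m2 => [[|[|[|[|?]]]] ?] [[|[|[|[|?]]]] ?]; rewrite !inE //=; auto.
Qed.

Lemma I4_01 (m1 m2 : 'I_4) : m1 \in [set ord0; @Ordinal 4 1 isT] ->
  m2 \in [set ord0; @Ordinal 4 1 isT] -> m1 != m2 ->
  (nat_of_ord m1 = 0 /\ nat_of_ord m2 = 1) \/ (nat_of_ord m1 = 1 /\ nat_of_ord m2 = 0).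
Proof.
by move: m1 m2 => [[|[|[|[|?]]]] ?] [[|[|[|[|?]]]] ?]; rewrite !inE //=; auto.
Qed.

Lemma or3_swap (x a b c : L) : [\/ x = a, x = b | x = c] <-> [\/ x = a, x = c | x = b].
Proof. by split; case=> ->; [apply: Or31|apply: Or33|apply: Or32|apply: Or31|apply: Or33|apply: Or32]. Qed.

Lemma iii_bwd V P : peq V (V2 P) -> P != \bot -> P != \top -> ~ atom P -> ~ atom (perp P) ->
  ~ (forall W : L -> Prop, has_dim perp W 4 -> pincl V W ->
       exists U1 U2 U3 : L -> Prop,
         [/\ ~ peq U1 U2 /\ ~ peq U1 U3 /\ ~ peq U2 U3,
             (forall U, U = U1 \/ U = U2 \/ U = U3 ->
                has_dim perp U 3 /\ pincl V U /\ ~ peq V U /\ pincl U W)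
           & forall U, has_dim perp U 3 -> pincl V U -> ~ peq V U ->
               pincl U W ->
               peq U U1 \/ peq U U2 \/ peq U U3]).
Proof.
move=> hV n0 n1 naP naQ H.
have [a [aP na naP']] := not_atom n0 naP.
have nQ : perp P != \bot by rewrite perp_eq0.
have [c [cQ nc ncQ]] := not_atom nQ naQ.
set y := P `&` perp a.
have eP : a `|` y = P by rewrite /y -oml.
have ny : y != \bot by apply: contra naP' => /eqP y0; rewrite -eP y0 joinx0.
have ay : a <= perp y by apply: orth_sym; exact: leIr.
have Pc : P <= perp c := orth_sym cQ.
have Pct : P `|` c != \top.
  apply/eqP => e; move: ncQ; rewrite (compl_uniq cQ) ?eqxx //; by rewrite joinC.
have gh : good (f4 a y c (perp (P `|` c))).
  have := split4 na ny nc ay (le_trans aP Pc) (le_trans (leIl _ _) Pc); rewrite eP; apply.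
  exact: Pct.
set h := f4 a y c (perp (P `|` c)).
have BSAh := Bf_BSA gh.
have WP : Bf h P.
  by rewrite -eP; apply: BSA_join => //; [exact: (Bf_f h ord0) | exact: (Bf_f h (@Ordinal 4 1 isT))].
have VW : pincl V (Bf h) by move=> x /(hV _); apply: V2_sub.
have [U1 [U2 [U3 [[n12 [n13 n23]] props _]]]] := H _ (good_dim gh) VW.
have gA : good (f3 P c (perp (P `|` c))) by apply: split3.
have gB : good (f3 a y (perp P)).
  by have := split3 na ny ay; rewrite eP; apply.
set A := Bf (f3 P c (perp (P `|` c))); set B := Bf (f3 a y (perp P)).
have card4 (X : {set 'I_4}) : #|X| + #|~: X| = 4 by rewrite cardsC card_ord.
have c01 : #|[set ord0; @Ordinal 4 1 isT]| = 2 by rewrite cards2.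
have J01 : J h [set ord0; @Ordinal 4 1 isT] = P by rewrite (JU h) !(J1 h) /= eP.
have class U : has_dim perp U 3 -> pincl V U -> pincl U (Bf h) -> peq U A \/ peq U B.
  move=> /dim_good [g [gg hU]] VU UW.
  have Ug : Bf g P by apply/(hU _)/VU/(hV _); exact: Or42.
  have [k ek] := dim3_elem gg Ug n0 n1.
  have [k1 [k2 [a1 a2 a3]]] := I3_others k.
  have Wg m : Bf h (g m) by apply/UW/(hU _); exact: Bf_f.
  have [T1 e1] := Wg k1; have [T2 e2] := Wg k2.
  have eI : T1 :&: T2 = set0 by apply: (Jdisj gh); rewrite -e1 -e2; exact: (g_orth gg).
  have m1 : T1 != set0 by apply: (J_nz (f:=h)); rewrite -e1 (g_nz gg).
  have m2 : T2 != set0 by apply: (J_nz (f:=h)); rewrite -e2 (g_nz gg).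
  have Ju : J h (T1 :|: T2) = perp (g k) by rewrite (JU h) -e1 -e2 (perp3 gg a1 a2 a3).
  have rg x : range g x <-> [\/ x = g k, x = g k1 | x = g k2] by apply: range3.
  case: ek => ek.
  - left; have eU : T1 :|: T2 = ~: [set ord0; @Ordinal 4 1 isT].
      by apply: (Jinj gh); rewrite Ju -ek -(JC gh) J01.
    have cC : #|~: [set ord0; @Ordinal 4 1 isT]| = 2.
      by apply: (@addnI #|[set ord0; @Ordinal 4 1 isT]|); rewrite card4 c01.
    have [i1 [i2 [t1 t2 i12]]] := two_single eU cC eI m1 m2.
    have mi1 : i1 \in ~: [set ord0; @Ordinal 4 1 isT] by rewrite -eU t1 !inE eqxx.
    have mi2 : i2 \in ~: [set ord0; @Ordinal 4 1 isT] by rewrite -eU t2 !inE eqxx orbT.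
    have g1 : g k1 = h i1 by rewrite e1 t1 (J1 h).
    have g2 : g k2 = h i2 by rewrite e2 t2 (J1 h).
    move=> x; rewrite (hU x); apply: (peq_range gg gA) => z.
    rewrite rg range_f3 -ek g1 g2 /h /f4.
    by case: (I4_23 mi1 mi2 i12) => -[-> ->] /=; split; case=> ->;
      first [exact: Or31 erefl | exact: Or32 erefl | exact: Or33 erefl].
  - right; have eU : T1 :|: T2 = [set ord0; @Ordinal 4 1 isT].
      by apply: (Jinj gh); rewrite Ju -ek perpK J01.
    have [i1 [i2 [t1 t2 i12]]] := two_single eU c01 eI m1 m2.
    have mi1 : i1 \in [set ord0; @Ordinal 4 1 isT] by rewrite -eU t1 !inE eqxx.
    have mi2 : i2 \in [set ord0; @Ordinal 4 1 isT] by rewrite -eU t2 !inE eqxx orbT.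
    have g1 : g k1 = h i1 by rewrite e1 t1 (J1 h).
    have g2 : g k2 = h i2 by rewrite e2 t2 (J1 h).
    move=> x; rewrite (hU x); apply: (peq_range gg gB) => z.
    rewrite rg range_f3 -ek g1 g2 /h /f4.
    by case: (I4_01 mi1 mi2 i12) => -[-> ->] /=; split; case=> ->;
      first [exact: Or31 erefl | exact: Or32 erefl | exact: Or33 erefl].
have cl i : i = U1 \/ i = U2 \/ i = U3 -> peq i A \/ peq i B.
  by move=> hi; have [? [? [_ ?]]] := props i hi; apply: class.
have tr (X Y Z : L -> Prop) : peq X Z -> peq Y Z -> peq X Y.
  by move=> e1 e2 x; rewrite e1 e2.
case: (cl U1 (or_introl erefl)) => c1; case: (cl U2 (or_intror (or_introl erefl))) => c2;
  case: (cl U3 (or_intror (or_intror erefl))) => c3.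
all: first [by apply: n12; apply: tr c1 c2 | by apply: n13; apply: tr c1 c3 | by apply: n23; apply: tr c2 c3].
Qed.

End OMLfacts.

Theorem lemma3p2 (d : Order.disp_t) (L : tbLatticeType d) (perp : L -> L)
  (HOML : orthomodular perp) (Hatomic : atomic (L := L))
  (V : L -> Prop) (P : L)
  (HV : generated_by perp V (fun x => x = P \/ x = perp P)) :
  (* (i) *)
  (maximalB perp V -> atom P /\ atom (perp P)) /\
  (* (ii) *)
  (forall W : L -> Prop, has_dim perp W 3 -> maximalB perp W -> pincl V W ->
     ((atom P /\ exists a b, [/\ atom a, atom b, a <> b & perp P = a `|` b]) \/
      (atom (perp P) /\ exists a b, [/\ atom a, atom b, a <> b & P = a `|` b])) /\
     (exists U1 U2 : L -> Prop,
        [/\ ~ peq U1 U2,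
            (has_dim perp U1 2 /\ pincl U1 W /\ ~ peq U1 V),
            (has_dim perp U2 2 /\ pincl U2 W /\ ~ peq U2 V)
          & forall U, has_dim perp U 2 -> pincl U W -> ~ peq U V ->
              peq U U1 \/ peq U U2])) /\
  (* (iii) *)
  (~ maximalB perp V ->
   ~ (exists W, [/\ has_dim perp W 3, maximalB perp W & pincl V W]) ->
   ((atom P \/ atom (perp P)) <->
    (forall W : L -> Prop, has_dim perp W 4 -> pincl V W ->
       exists U1 U2 U3 : L -> Prop,
         [/\ ~ peq U1 U2 /\ ~ peq U1 U3 /\ ~ peq U2 U3,
             (forall U, U = U1 \/ U = U2 \/ U = U3 ->
                has_dim perp U 3 /\ pincl V U /\ ~ peq V U /\ pincl U W)
           & forall U, has_dim perp U 3 -> pincl V U -> ~ peq V U ->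
               pincl U W ->
               peq U U1 \/ peq U U2 \/ peq U U3]))).
Proof.
have [_ [Fnz _ _ _ _]] := HV.
have n0 : P != \bot := Fnz P (or_introl erefl).
have nQ : perp P != \bot := Fnz (perp P) (or_intror erefl).
have n1 : P != \top by rewrite -(perp_eq0 HOML).
have nQ1 : perp P != \top by rewrite (perp_eq1 HOML).
have hV : peq V (V2 perp P) := V2_char HOML HV (fun x => iff_refl _).
have hV' : peq V (V2 perp (perp P)).
  by move=> x; rewrite hV; symmetry; apply: (V2_perp HOML).
split.
  move=> m; split; [exact (part_i HOML hV n0 n1 m) | exact (part_i HOML hV' nQ nQ1 m)].
split.
  move=> W dW mW VW; have [g [gg hW]] := dim_good dW.
  have ha := max_atoms HOML gg hW mW.
  have WP : Bf g P by apply/(hW _)/VW/(hV _); exact: Or42.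
  have [k [e|e]] := dim3_elem HOML gg WP n0 n1.
  - have hVk : peq V (V2 perp (g k)) by rewrite -e.
    have [[a [b [aa ab ne eab]]] U] := part_ii_core HOML gg hW ha hVk.
    split => //; left; split; first by rewrite e.
    by exists a, b; rewrite e.
  - have hVk : peq V (V2 perp (g k)) by rewrite -e.
    have [[a [b [aa ab ne eab]]] U] := part_ii_core HOML gg hW ha hVk.
    split => //; right; split; first by rewrite e.
    by exists a, b; rewrite -e (perpK HOML) in eab.
move=> _ _; split.
  case=> aP W dW VW; [exact (iii_fwd HOML hV aP dW VW) | exact (iii_fwd HOML hV' aP dW VW)].
move=> H; apply: NNPP => /not_or_and [na nb]; exact (iii_bwd HOML hV n0 n1 na nb H).
Qed.
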